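(* Let $\alpha\ge -1/2$. For every $0\le x\le 2\sqrt{\alpha+1}$ and every $m\in\mathbb{N}\cup\{0\}$, $$\Gamma(\alpha+1)\sum_{n=0}^{2m+1}\frac{(-1)^n(x/2)^{2n}}{n!\,\Gamma(n+\alpha+1)}\ \le\ j_\alpha(x)\ \le\ \Gamma(\alpha+1)\sum_{n=0}^{2m}\frac{(-1)^n(x/2)^{2n}}{n!\,\Gamma(n+\alpha+1)}.$$
   Context: For $\alpha\ge -1/2$, the normalized Bessel function of order $\alpha$ is $j_\alpha(x)=\Gamma(\alpha+1)\sum_{n=0}^\infty\frac{(-1)^n(x/2)^{2n}}{n!\,\Gamma(n+\alpha+1)}$, where $\Gamma$ is the Euler gamma function. *)

(* Defs.v *)
From Stdlib Require Import Reals.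
From Coquelicot Require Import Coquelicot.
Open Scope R_scope.

Definition Gamma (s : R) : R :=
  RInt_gen (fun t => Rpower t (s - 1) * exp (- t)) (at_right 0) (Rbar_locally p_infty).

Definition bessel_term (alpha x : R) (n : nat) : R :=
  (-1) ^ n * (x / 2) ^ (2 * n) / (INR (Factorial.fact n) * Gamma (INR n + alpha + 1)).

Definition bessel_j (alpha x : R) : R :=
  Gamma (alpha + 1) * Series (bessel_term alpha x).

(* Partial sum Gamma(alpha+1) * sum_{n=0}^{N} bessel_term n  (sum_n is inclusive) *)
Definition bessel_partial (alpha x : R) (N : nat) : R :=
  Gamma (alpha + 1) * sum_n (bessel_term alpha x) N.

(* Main.v *)
Require Import Defs.
From Stdlib Require Import Reals.
From Coquelicot Require Import Coquelicot.
From Stdlib Require Import Lra Lia FunctionalExtensionality.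
Open Scope R_scope.

Definition gf (s t : R) := Rpower t (s - 1) * exp (- t).

Lemma gf_cont s t : 0 < t -> continuous (gf s) t.
Proof.
  intros Ht. apply (ex_derive_continuous (K:=R_AbsRing) (V:=R_NormedModule)). unfold gf, Rpower. auto_derive. lra.
Qed.

Lemma gf_pos s t : 0 < t -> 0 < gf s t.
Proof. intros. unfold gf, Rpower. apply Rmult_lt_0_compat; apply exp_pos. Qed.

Lemma gf_exRInt s a b : 0 < a -> 0 < b -> ex_RInt (gf s) a b.
Proof.
  intros Ha Hb. apply (ex_RInt_continuous (V:=R_CompleteNormedModule)). intros z Hz. apply gf_cont.
  destruct Hz as [Hz _]. apply Rlt_le_trans with (2 := Hz).
  unfold Rmin; destruct Rle_dec; lra.
Qed.

Lemma key_bound c t : 0 < c -> 0 < t -> Rpower t c <= Rpower c c * exp t.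
Proof.
  intros Hc Ht.
  assert (H1 : t / c <= exp (t / c)).
  { assert (0 < t / c) by (apply Rdiv_lt_0_compat; lra).
    pose proof (exp_ineq1 (t/c)). lra. }
  replace t with (c * (t / c)) at 1 by (field; lra).
  rewrite <- Rpower_mult_distr by (try apply Rdiv_lt_0_compat; lra).
  apply Rmult_le_compat_l. unfold Rpower; left; apply exp_pos.
  replace (exp t) with (Rpower (exp (t / c)) c).
  - apply Rle_Rpower_l. lra. split; [apply Rdiv_lt_0_compat; lra| exact H1].
  - unfold Rpower. rewrite ln_exp. f_equal. field. lra.
Qed.

Definition KK s := Rpower (s + 1) (s + 1).

Lemma gf_le_inv2 s t : 0 < s -> 0 < t -> gf s t <= KK s / (t * t).
Proof.
  intros Hs Ht. unfold gf.
  replace (Rpower t (s - 1)) with (Rpower t (s + 1) * / (t * t)).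
  2:{ replace (s - 1) with ((s + 1) + Ropp 2) by ring.
      rewrite (Rpower_plus (s+1) (Ropp 2)). rewrite Rpower_Ropp. f_equal. f_equal.
      replace 2 with (INR 2) by (simpl; ring). rewrite Rpower_pow by lra. simpl; ring. }
  pose proof (key_bound (s+1) t ltac:(lra) Ht).
  unfold KK. unfold Rdiv.
  assert (0 < / (t*t)) by (apply Rinv_0_lt_compat; nra).
  assert (Hee : exp (-t) * exp t = 1) by (rewrite <- exp_plus; replace (-t+t) with 0 by ring; apply exp_0).
  assert (0 < exp (-t)) by apply exp_pos.
  assert (Rpower t (s+1) * exp (-t) <= Rpower (s+1) (s+1)).
  { apply Rle_trans with (Rpower (s + 1) (s + 1) * exp t * exp (-t)).
    apply Rmult_le_compat_r; lra. right. rewrite Rmult_assoc. rewrite (Rmult_comm (exp t)). rewrite Hee. ring. }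
  replace (Rpower t (s + 1) * / (t * t) * exp (- t)) with ((Rpower t (s+1) * exp (-t)) * / (t*t)) by ring.
  apply Rmult_le_compat_r; lra.
Qed.

Lemma RInt_bound_gen (f B : R -> R) :
  (forall u v, 0 < u -> 0 < v -> ex_RInt f u v) ->
  (forall u v, 0 < u -> u <= v -> 0 <= RInt f u v <= B v - B u) ->
  forall u v, 0 < u -> 0 < v -> Rabs (RInt f u v) <= Rabs (B v - B u).
Proof.
  intros Hex Hb u v Hu Hv.
  destruct (Rle_dec u v) as [H|H].
  - destruct (Hb u v Hu H). rewrite !Rabs_right; lra.
  - assert (v <= u) by lra. destruct (Hb v u Hv H0).
    rewrite <- (opp_RInt_swap f v u) by (apply Hex; lra).
    change (opp (RInt f v u)) with (- RInt f v u).
    rewrite Rabs_Ropp. rewrite Rabs_right by lra.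
    replace (B v - B u) with (- (B u - B v)) by ring. rewrite Rabs_Ropp.
    rewrite Rabs_right; lra.
Qed.

Lemma Rpow_cont y t : 0 < t -> continuous (fun t => Rpower t y) t.
Proof.
  intros Ht. apply (ex_derive_continuous (K:=R_AbsRing) (V:=R_NormedModule)).
  unfold Rpower. auto_derive. lra.
Qed.

Lemma gf_bound0 s u v : 0 < s -> 0 < u -> u <= v ->
  0 <= RInt (gf s) u v <= Rpower v s / s - Rpower u s / s.
Proof.
  intros Hs Hu Huv. split.
  - apply RInt_ge_0; auto. apply gf_exRInt; lra.
    intros x Hx. left. apply gf_pos. lra.
  - assert (HI : is_RInt (fun t => Rpower t (s - 1)) u v
                    (minus (Rpower v s / s) (Rpower u s / s))).
    { apply (is_RInt_derive (V:=R_CompleteNormedModule) (fun t => Rpower t s / s)).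
      + intros x Hx. assert (0 < x).
        { destruct Hx as [Hx _]. apply Rlt_le_trans with (2 := Hx). unfold Rmin; destruct Rle_dec; lra. }
        unfold Rpower. auto_derive. lra.
        replace ((s - 1) * ln x) with (s * ln x + - ln x) by ring.
        rewrite exp_plus, exp_Ropp, exp_ln by lra. field. lra.
      + intros x Hx. apply Rpow_cont.
        destruct Hx as [Hx _]. apply Rlt_le_trans with (2 := Hx). unfold Rmin; destruct Rle_dec; lra. }
    apply Rle_trans with (RInt (fun t => Rpower t (s-1)) u v).
    2:{ right. rewrite (is_RInt_unique _ _ _ _ HI). unfold minus, plus, opp; simpl. ring. }
    apply RInt_le; auto. apply gf_exRInt; lra. eexists; exact HI.
    intros x Hx. unfold gf. rewrite <- Rmult_1_r.
    apply Rmult_le_compat_l. unfold Rpower; left; apply exp_pos.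
    rewrite <- exp_0. apply exp_le_3 || (left; apply exp_increasing; lra).
Qed.

Lemma gf_bound1 s u v : 0 < s -> 0 < u -> u <= v ->
  0 <= RInt (gf s) u v <= (- KK s / v) - (- KK s / u).
Proof.
  intros Hs Hu Huv. split.
  - apply RInt_ge_0; auto. apply gf_exRInt; lra.
    intros x Hx. left. apply gf_pos. lra.
  - assert (HI : is_RInt (fun t => KK s / (t * t)) u v
                    (minus (- KK s / v) (- KK s / u))).
    { apply (is_RInt_derive (V:=R_CompleteNormedModule) (fun t => - KK s / t)).
      + intros x Hx. assert (0 < x).
        { destruct Hx as [Hx _]. apply Rlt_le_trans with (2 := Hx). unfold Rmin; destruct Rle_dec; lra. }
        auto_derive. lra. field. lra.
      + intros x Hx. assert (0 < x).
        { destruct Hx as [Hx _]. apply Rlt_le_trans with (2 := Hx). unfold Rmin; destruct Rle_dec; lra. }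
        apply (ex_derive_continuous (K:=R_AbsRing) (V:=R_NormedModule)).
        auto_derive. nra. }
    apply Rle_trans with (RInt (fun t => KK s / (t * t)) u v).
    2:{ right. rewrite (is_RInt_unique _ _ _ _ HI). unfold minus, plus, opp; simpl. ring. }
    apply RInt_le; auto. apply gf_exRInt; lra. eexists; exact HI.
    intros x Hx. apply gf_le_inv2; lra.
Qed.

Lemma gf_abs0 s u v : 0 < s -> 0 < u -> 0 < v ->
  Rabs (RInt (gf s) u v) <= Rabs (Rpower v s / s - Rpower u s / s).
Proof.
  intros Hs. apply (RInt_bound_gen (gf s) (fun t => Rpower t s / s)).
  intros; apply gf_exRInt; auto. intros; apply gf_bound0; auto.
Qed.

Lemma gf_abs1 s u v : 0 < s -> 0 < u -> 0 < v ->
  Rabs (RInt (gf s) u v) <= Rabs (- KK s / v - - KK s / u).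
Proof.
  intros Hs. apply (RInt_bound_gen (gf s) (fun t => - KK s / t)).
  intros; apply gf_exRInt; auto. intros; apply gf_bound1; auto.
Qed.

Lemma atr_lt d : 0 < d -> at_right 0 (fun a => 0 < a < d).
Proof.
  intros Hd. exists (mkposreal d Hd). intros y Hy Hp.
  unfold ball in Hy; simpl in Hy; unfold AbsRing_ball, abs, minus, plus, opp in Hy; simpl in Hy.
  rewrite Ropp_0, Rplus_0_r in Hy. apply Rabs_def2 in Hy. lra.
Qed.

Lemma KK_pos s : 0 < KK s.
Proof. unfold KK, Rpower. apply exp_pos. Qed.

Lemma gf_exists s : 0 < s -> exists l, is_RInt_gen (gf s) (at_right 0) (Rbar_locally p_infty) l.
Proof.
  intros Hs. unfold is_RInt_gen.
  apply (filterlimi_locally_cauchy (U:=R_CompleteSpace)).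
  - apply Filter_prod with (fun a => 0 < a) (fun b => 0 < b).
    + exists (mkposreal 1 Rlt_0_1). intros; auto.
    + exists 0. intros; auto.
    + intros a b Ha Hb. simpl. split.
      * exists (RInt (gf s) a b). apply (RInt_correct (V:=R_CompleteNormedModule)). apply gf_exRInt; auto.
      * intros y1 y2 H1 H2. apply (is_RInt_unique (V:=R_CompleteNormedModule)) in H1. apply (is_RInt_unique (V:=R_CompleteNormedModule)) in H2. congruence.
  - intros eps.
    set (d := Rpower (s * eps / 4) (/ s)).
    assert (Hd : 0 < d) by (unfold d, Rpower; apply exp_pos).
    assert (Hds : Rpower d s = s * eps / 4).
    { unfold d. rewrite Rpower_mult. replace (/ s * s) with 1 by (field; lra).
      apply Rpower_1. pose proof (cond_pos eps). nra. }
    set (M := 4 * KK s / eps).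
    assert (HM : 0 < M).
    { unfold M. pose proof (KK_pos s). pose proof (cond_pos eps).
      apply Rdiv_lt_0_compat; lra. }
    exists (fun ab => (0 < fst ab < d) /\ M < snd ab). split.
    + apply Filter_prod with (fun a => 0 < a < d) (fun b => M < b).
      apply atr_lt; auto. exists M; auto. intros; simpl; auto.
    + intros [a b] [a' b'] [Ha Hb] [Ha' Hb'] u' v' Hu Hv. simpl in *.
      apply (is_RInt_unique (V:=R_CompleteNormedModule)) in Hu. apply (is_RInt_unique (V:=R_CompleteNormedModule)) in Hv. subst u' v'.
      unfold ball; simpl; unfold AbsRing_ball, abs, minus, plus, opp; simpl.
      assert (E : RInt (gf s) a' b' = RInt (gf s) a' a + RInt (gf s) a b + RInt (gf s) b b').
      { rewrite <- (RInt_Chasles (gf s) a' b b') by (apply gf_exRInt; lra).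
        rewrite <- (RInt_Chasles (gf s) a' a b) by (apply gf_exRInt; lra).
        reflexivity. }
      rewrite E. replace (RInt (gf s) a' a + RInt (gf s) a b + RInt (gf s) b b' + - RInt (gf s) a b)
        with (RInt (gf s) a' a + RInt (gf s) b b') by ring.
      eapply Rle_lt_trans. apply Rabs_triang.
      pose proof (gf_abs0 s a' a Hs ltac:(lra) ltac:(lra)) as A0.
      pose proof (gf_abs1 s b b' Hs ltac:(lra) ltac:(lra)) as A1.
      assert (B0 : Rabs (Rpower a s / s - Rpower a' s / s) < eps / 4).
      { pose proof (Rlt_Rpower_l a d s Hs ltac:(lra)).
        pose proof (Rlt_Rpower_l a' d s Hs ltac:(lra)).
        assert (0 < Rpower a s) by (unfold Rpower; apply exp_pos).
        assert (0 < Rpower a' s) by (unfold Rpower; apply exp_pos).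
        rewrite Hds in *. apply Rabs_def1.
        apply Rmult_lt_reg_l with s; auto. field_simplify; lra.
        apply Rmult_lt_reg_l with s; auto. field_simplify; lra. }
      assert (B1 : Rabs (- KK s / b' - - KK s / b) < eps / 4).
      { pose proof (KK_pos s). pose proof (cond_pos eps).
        assert (KK s / b < eps / 4).
        { apply Rlt_le_trans with (KK s / M).
          apply Rmult_lt_compat_l; auto. apply Rinv_lt_contravar; nra.
          unfold M. right. field. split; lra. }
        assert (KK s / b' < eps / 4).
        { apply Rlt_le_trans with (KK s / M).
          apply Rmult_lt_compat_l; auto. apply Rinv_lt_contravar; nra.
          unfold M. right. field. split; lra. }
        assert (0 < KK s / b) by (apply Rdiv_lt_0_compat; lra).
        assert (0 < KK s / b') by (apply Rdiv_lt_0_compat; lra).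
        apply Rabs_def1; unfold Rdiv in *; lra. }
      pose proof (cond_pos eps). lra.
Qed.

Lemma Gamma_is s : 0 < s -> is_RInt_gen (gf s) (at_right 0) (Rbar_locally p_infty) (Gamma s).
Proof.
  intros Hs. destruct (gf_exists s Hs) as [l Hl].
  unfold Gamma. change (fun t => Rpower t (s - 1) * exp (- t)) with (gf s).
  rewrite (is_RInt_gen_unique (V:=R_CompleteNormedModule) _ _ Hl). exact Hl.
Qed.

Lemma Gamma_pos s : 0 < s -> 0 < Gamma s.
Proof.
  intros Hs. pose proof (Gamma_is s Hs) as H.
  set (c := RInt (gf s) 1 2).
  assert (Hc : 0 < c).
  { apply RInt_gt_0. lra. intros; apply gf_pos; lra. intros; apply gf_cont; lra. }
  destruct (Rlt_or_le 0 (Gamma s)) as [G|G]; auto. exfalso.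
  assert (HF : filter_prod (at_right 0) (Rbar_locally p_infty)
    (fun ab => exists y, is_RInt (gf s) (fst ab) (snd ab) y /\ ball (Gamma s) (mkposreal c Hc) y)).
  { apply H. apply locally_ball. }
  assert (HP : filter_prod (at_right 0) (Rbar_locally p_infty) (fun ab => 0 < fst ab < 1 /\ 2 < snd ab)).
  { apply Filter_prod with (fun a => 0 < a < 1) (fun b => 2 < b).
    apply atr_lt; lra. exists 2; auto. intros; simpl; auto. }
  destruct (filter_ex _ (filter_and _ _ HF HP)) as [[a b] [[y [Hy Hb]] [Ha Hb2]]].
  simpl in *. apply (is_RInt_unique (V:=R_CompleteNormedModule)) in Hy. subst y.
  unfold ball in Hb; simpl in Hb; unfold AbsRing_ball, abs, minus, plus, opp in Hb; simpl in Hb.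
  apply Rabs_def2 in Hb.
  assert (E : RInt (gf s) a b = RInt (gf s) a 1 + c + RInt (gf s) 2 b).
  { unfold c. rewrite <- (RInt_Chasles (gf s) a 2 b) by (apply gf_exRInt; lra).
    rewrite <- (RInt_Chasles (gf s) a 1 2) by (apply gf_exRInt; lra). reflexivity. }
  assert (0 <= RInt (gf s) a 1) by (apply RInt_ge_0; [lra| apply gf_exRInt; lra | intros; left; apply gf_pos; lra]).
  assert (0 <= RInt (gf s) 2 b) by (apply RInt_ge_0; [lra| apply gf_exRInt; lra | intros; left; apply gf_pos; lra]).
  simpl in Hb. lra.
Qed.

Definition hh s t := - (Rpower t s * exp (- t)).
Definition dh s t := Rpower t s * exp (- t) - s * gf s t.

Lemma hh_derive s x : 0 < x -> is_derive (hh s) x (dh s x).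
Proof.
  intros Hx. unfold hh, dh, gf, Rpower. auto_derive. lra.
  replace ((s - 1) * ln x) with (s * ln x + - ln x) by ring.
  rewrite exp_plus, (exp_Ropp (ln x)), exp_ln by lra. field. lra.
Qed.

Lemma dh_cont s x : 0 < x -> continuous (dh s) x.
Proof.
  intros Hx. apply (ex_derive_continuous (K:=R_AbsRing) (V:=R_NormedModule)).
  unfold dh, gf, Rpower. auto_derive. lra.
Qed.

Lemma Derive_hh_cont s x : 0 < x -> continuous (Derive (hh s)) x.
Proof.
  intros Hx. apply continuous_ext_loc with (dh s).
  - exists (mkposreal x Hx). intros y Hy.
    unfold ball in Hy; simpl in Hy; unfold AbsRing_ball, abs, minus, plus, opp in Hy; simpl in Hy.
    apply Rabs_def2 in Hy. symmetry. apply is_derive_unique. apply hh_derive. lra.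
  - apply dh_cont; auto.
Qed.

Lemma abs_hh s t : 0 < t -> Rabs (hh s t) = Rpower t s * exp (- t).
Proof.
  intros Ht. unfold hh. rewrite Rabs_Ropp. apply Rabs_right. left.
  apply Rmult_lt_0_compat; [unfold Rpower|]; apply exp_pos.
Qed.

Lemma hh_lim0 s : 0 < s -> filterlim (hh s) (at_right 0) (locally 0).
Proof.
  intros Hs. apply filterlim_locally. intros eps.
  set (d := Rpower eps (/ s)).
  assert (Hd : 0 < d) by (unfold d, Rpower; apply exp_pos).
  assert (Hds : Rpower d s = eps).
  { unfold d. rewrite Rpower_mult. replace (/ s * s) with 1 by (field; lra).
    apply Rpower_1. apply cond_pos. }
  eapply filter_imp. 2: apply (atr_lt d Hd).
  intros t Ht. unfold ball; simpl; unfold AbsRing_ball, abs, minus, plus, opp; simpl.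
  rewrite Ropp_0, Rplus_0_r. rewrite abs_hh by lra.
  pose proof (Rlt_Rpower_l t d s Hs ltac:(lra)).
  assert (exp (- t) < 1) by (rewrite <- exp_0; apply exp_increasing; lra).
  assert (0 < Rpower t s) by (unfold Rpower; apply exp_pos).
  assert (0 < exp (-t)) by apply exp_pos. nra.
Qed.

Lemma hh_liminf s : 0 < s -> filterlim (hh s) (Rbar_locally p_infty) (locally 0).
Proof.
  intros Hs. apply filterlim_locally. intros eps.
  pose proof (cond_pos eps) as He. pose proof (KK_pos s) as HK.
  exists (KK s / eps + 1). intros t Ht.
  assert (Ht0 : 0 < t). { assert (0 < KK s / eps) by (apply Rdiv_lt_0_compat; lra). lra. }
  unfold ball; simpl; unfold AbsRing_ball, abs, minus, plus, opp; simpl.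
  rewrite Ropp_0, Rplus_0_r. rewrite abs_hh by lra.
  pose proof (key_bound (s + 1) t ltac:(lra) Ht0) as B. fold (KK s) in B.
  rewrite Rpower_plus, Rpower_1 in B by lra.
  assert (Hee : exp (-t) * exp t = 1) by (rewrite <- exp_plus; replace (-t+t) with 0 by ring; apply exp_0).
  assert (0 < exp (-t)) by apply exp_pos.
  assert (B2 : Rpower t s * t * exp (-t) <= KK s).
  { apply Rle_trans with (KK s * exp t * exp (-t)). apply Rmult_le_compat_r; lra.
    right. rewrite Rmult_assoc, (Rmult_comm (exp t)), Hee. ring. }
  assert (KK s < eps * t).
  { apply Rmult_lt_reg_r with (/ eps). apply Rinv_0_lt_compat; lra.
    replace (eps * t * / eps) with t by (field; lra). unfold Rdiv in Ht. lra. }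
  assert (0 < Rpower t s) by (unfold Rpower; apply exp_pos).
  apply Rmult_lt_reg_r with t; auto. nra.
Qed.

Lemma Gamma_succ s : 0 < s -> Gamma (s + 1) = s * Gamma s.
Proof.
  intros Hs.
  assert (HD : is_RInt_gen (Derive (hh s)) (at_right 0) (Rbar_locally p_infty) (0 - 0)).
  { apply is_RInt_gen_Derive.
    - apply Filter_prod with (fun a => 0 < a) (fun b => 0 < b).
      exists (mkposreal 1 Rlt_0_1); intros; auto. exists 0; intros; auto.
      intros a b Ha Hb x Hx. simpl in Hx. eexists. apply hh_derive.
      destruct Hx as [Hx _]. apply Rlt_le_trans with (2 := Hx). unfold Rmin; destruct Rle_dec; lra.
    - apply Filter_prod with (fun a => 0 < a) (fun b => 0 < b).
      exists (mkposreal 1 Rlt_0_1); intros; auto. exists 0; intros; auto.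
      intros a b Ha Hb x Hx. simpl in Hx. apply Derive_hh_cont.
      destruct Hx as [Hx _]. apply Rlt_le_trans with (2 := Hx). unfold Rmin; destruct Rle_dec; lra.
    - apply hh_lim0; auto.
    - apply hh_liminf; auto. }
  pose proof (is_RInt_gen_scal _ s _ (Gamma_is s Hs)) as HS.
  pose proof (is_RInt_gen_plus _ _ _ _ HD HS) as HP.
  apply (is_RInt_gen_ext _ (gf (s + 1))) in HP.
  - transitivity (RInt_gen (gf (s + 1)) (at_right 0) (Rbar_locally p_infty)). reflexivity.
    rewrite (is_RInt_gen_unique (V:=R_CompleteNormedModule) _ _ HP).
    unfold plus, scal; simpl. unfold mult; simpl. ring.
  - apply Filter_prod with (fun a => 0 < a) (fun b => 0 < b).
    exists (mkposreal 1 Rlt_0_1); intros; auto. exists 0; intros; auto.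
    intros a b Ha Hb x Hx. simpl in Hx.
    assert (0 < x). { destruct Hx as [Hx _]. apply Rle_lt_trans with (2 := Hx). unfold Rmin; destruct Rle_dec; lra. }
    rewrite (is_derive_unique _ _ _ (hh_derive s x H)).
    unfold dh, gf, plus, scal; simpl; unfold mult; simpl.
    replace (s + 1 - 1) with s by ring. ring.
Qed.

Theorem mainTheorem7 (alpha : R) (halpha : -1/2 <= alpha)
  (x : R) (hx0 : 0 <= x) (hx1 : x <= 2 * sqrt (alpha + 1)) (m : nat) :
  bessel_partial alpha x (2 * m + 1) <= bessel_j alpha x /\
  bessel_j alpha x <= bessel_partial alpha x (2 * m).
Proof.
  set (A := alpha).
  set (Un := fun n => (x/2)^(2*n) / (INR (Factorial.fact n) * Gamma (INR n + A + 1))).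
  assert (Gpos : forall n, 0 < Gamma (INR n + A + 1)).
  { intros n. apply Gamma_pos. pose proof (pos_INR n). unfold A. lra. }
  assert (Grec : forall n, Gamma (INR (S n) + A + 1) = (INR n + A + 1) * Gamma (INR n + A + 1)).
  { intros n. rewrite S_INR. replace (INR n + 1 + A + 1) with ((INR n + A + 1) + 1) by ring.
    apply Gamma_succ. pose proof (pos_INR n). unfold A. lra. }
  set (r := fun n => (x/2)^2 / ((INR n + 1) * (INR n + A + 1))).
  assert (Urec : forall n, Un (S n) = Un n * r n).
  { intros n. unfold Un, r. rewrite fact_simpl, mult_INR, Grec.
    replace (2 * S n)%nat with (2 * n + 2)%nat by lia. rewrite pow_add.
    rewrite S_INR. pose proof (pos_INR n). pose proof (Gpos n).
    pose proof (INR_fact_neq_0 n). field. unfold A in *. repeat split; try lra; auto. }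
  assert (Hx2 : (x/2)^2 <= A + 1).
  { assert (x / 2 <= sqrt (A + 1)) by (unfold A; lra).
    assert (0 <= x/2) by lra.
    rewrite <- (sqrt_sqrt (A + 1)) by (unfold A; lra).
    simpl. rewrite Rmult_1_r. apply Rmult_le_compat; lra. }
  assert (r_nonneg : forall n, 0 <= r n).
  { intros n. unfold r. pose proof (pos_INR n). apply Rmult_le_pos. apply pow_le; lra.
    left. apply Rinv_0_lt_compat. apply Rmult_lt_0_compat; unfold A; lra. }
  assert (r_le : forall n, r n <= / (INR n + 1)).
  { intros n. unfold r. pose proof (pos_INR n).
    apply Rle_trans with ((INR n + A + 1) / ((INR n + 1) * (INR n + A + 1))).
    apply Rmult_le_compat_r. left. apply Rinv_0_lt_compat. apply Rmult_lt_0_compat; unfold A; lra.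
    lra. right. field. unfold A; split; lra. }
  assert (U_nonneg : forall n, 0 <= Un n).
  { intros n. unfold Un. apply Rmult_le_pos. apply pow_le; lra.
    left. apply Rinv_0_lt_compat. apply Rmult_lt_0_compat. apply INR_fact_lt_0. apply Gpos. }
  assert (Udec : Un_decreasing Un).
  { intros n. rewrite Urec. pose proof (U_nonneg n). pose proof (r_le n).
    assert (/ (INR n + 1) <= 1).
    { pose proof (pos_INR n). rewrite <- Rinv_1. apply Rinv_le_contravar; lra. }
    pose proof (r_nonneg n). nra. }
  assert (Ule0 : forall n, Un n <= Un 0%nat).
  { induction n. lra. eapply Rle_trans. apply Udec. auto. }
  assert (Ubound : forall n, Un (S n) <= Un 0%nat * / INR (S n)).
  { intros n. rewrite Urec, S_INR. pose proof (r_le n). pose proof (r_nonneg n).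
    pose proof (U_nonneg n). pose proof (Ule0 n).
    apply Rle_trans with (Un 0%nat * r n). apply Rmult_le_compat_r; lra.
    apply Rmult_le_compat_l; auto. }
  assert (Ucv : Un_cv Un 0).
  { intros eps Heps.
    assert (He' : 0 < eps / (Un 0%nat + 1)).
    { apply Rdiv_lt_0_compat; auto. pose proof (U_nonneg 0%nat). lra. }
    destruct (archimed_cor1 _ He') as [N [HN1 HN2]].
    exists N. intros n Hn. unfold R_dist. rewrite Rminus_0_r. rewrite Rabs_right by (apply Rle_ge; apply U_nonneg).
    destruct n as [|n]. lia.
    eapply Rle_lt_trans. apply Ubound.
    assert (/ INR (S n) <= / INR N).
    { apply Rinv_le_contravar. apply lt_0_INR; lia. apply le_INR; lia. }
    pose proof (U_nonneg 0%nat).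
    assert (0 < / INR N) by (apply Rinv_0_lt_compat; apply lt_0_INR; lia).
    apply Rle_lt_trans with ((Un 0%nat + 1) * / INR N).
    apply Rle_trans with (Un 0%nat * / INR N). apply Rmult_le_compat_l; auto. nra.
    apply Rmult_lt_reg_l with (/ (Un 0%nat + 1)). apply Rinv_0_lt_compat; lra.
    replace (/ (Un 0%nat + 1) * ((Un 0%nat + 1) * / INR N)) with (/ INR N) by (field; split; [apply not_0_INR; lia| lra]).
    unfold Rdiv in HN1. lra. }
  assert (Hbt : bessel_term alpha x = tg_alt Un).
  { apply functional_extensionality. intros n. unfold bessel_term, tg_alt, Un, A. unfold Rdiv. ring. }
  destruct (alternated_series Un Udec Ucv) as [l Hl].
  assert (HS : Series (bessel_term alpha x) = l).
  { apply is_series_unique. apply is_series_Reals. rewrite Hbt. exact Hl. }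
  pose proof (alternated_series_ineq Un l m Udec Ucv Hl) as [I1 I2].
  assert (GA : 0 < Gamma (alpha + 1)) by (apply Gamma_pos; lra).
  unfold A in *. unfold bessel_partial, bessel_j. rewrite HS, !sum_n_Reals, Hbt.
  replace (2 * m + 1)%nat with (S (2 * m)) by lia.
  split; apply Rmult_le_compat_l; lra.
Qed.
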